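(* For every finite simple graph $G$ on $n$ vertices with at least one edge, $$\min_{\lambda_n^{-1}\le x\le 0}W(x)\le n\Big(1-\frac{\delta}{\mu_1}\Big),$$ where $W(x)$ is the (unweighted) walk-generating function of $G$, $\delta$ the minimum degree, $\mu_1$ the largest eigenvalue of the Laplacian $L=D-A$, and $\lambda_n$ the smallest eigenvalue of the adjacency matrix $A$.
   Context: $A$ is the 0/1 adjacency matrix, $D$ the diagonal degree matrix, $\boldsymbol 1$ the all-ones vector. $W(x)=\langle\boldsymbol 1,(I-xA)^{-1}\boldsymbol 1\rangle=\sum_{\lambda\in\sigma(A)}\frac{\langle\boldsymbol 1,P_\lambda\boldsymbol 1\rangle}{1-\lambda x}$, where $P_\lambda$ is the orthogonal projection onto the $\lambda$-eigenspace of $A$, terms with $\langle\boldsymbol 1,P_\lambda\boldsymbol 1\rangle=0$ are omitted, and the value at a pole is $+\infty$. *)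

(* Defs.v *)
From HB Require Import structures.
From mathcomp Require Import all_boot all_order all_algebra.
From mathcomp Require Import polyrcf.
Set Implicit Arguments. Unset Strict Implicit. Unset Printing Implicit Defensive.
Import Order.TTheory GRing.Theory Num.Theory.
Local Open Scope ring_scope.

Definition simple_graph (n : nat) (e : rel 'I_n) : Prop :=
  symmetric e /\ irreflexive e.

Definition has_edge (n : nat) (e : rel 'I_n) : Prop := exists i j, e i j.

Definition adjm (R : nzRingType) (n : nat) (e : rel 'I_n) : 'M[R]_n :=
  \matrix_(i, j) (e i j)%:R.

Definition deg (n : nat) (e : rel 'I_n) (i : 'I_n) : nat := #|[set j | e i j]|.

Definition degm (R : nzRingType) (n : nat) (e : rel 'I_n) : 'M[R]_n :=
  \matrix_(i, j) ((i == j)%:R * (deg e i)%:R).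

Definition laplm (R : nzRingType) (n : nat) (e : rel 'I_n) : 'M[R]_n :=
  degm R e - adjm R e.

(* minimum degree (n is an upper bound for every degree, used as neutral) *)
Definition mindeg (n : nat) (e : rel 'I_n) : nat :=
  \big[minn/n]_(i < n) deg e i.

(* the list of distinct (real) eigenvalues of a matrix, i.e. real roots of
   its characteristic polynomial *)
Definition spec (R : rcfType) (n : nat) (M : 'M[R]_n) : seq R :=
  rootsR (char_poly M).

Definition eig_min (R : rcfType) (n : nat) (M : 'M[R]_n) : R :=
  let s := spec M in \big[Num.min/head 0 s]_(r <- s) r.

Definition eig_max (R : rcfType) (n : nat) (M : 'M[R]_n) : R :=
  let s := spec M in \big[Num.max/head 0 s]_(r <- s) r.

(* orthogonal projection (on column vectors) onto the row space of a
   matrix B with linearly independent rows: P = B^T (B B^T)^{-1} B *)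
Definition orth_proj (R : fieldType) (m n : nat) (B : 'M[R]_(m, n)) : 'M[R]_n :=
  B^T *m invmx (B *m B^T) *m B.

Definition eigproj (R : fieldType) (n : nat) (M : 'M[R]_n) (l : R) : 'M[R]_n :=
  orth_proj (row_base (eigenspace M l)).

Definition ones (R : nzRingType) (n : nat) : 'cV[R]_n := const_mx 1.

Definition eigweight (R : fieldType) (n : nat) (M : 'M[R]_n) (l : R) : R :=
  ((ones R n)^T *m eigproj M l *m ones R n) 0 0.

(* W(x) = sum over lambda in spec(A) with nonzero weight of
   <1,P_lambda 1>/(1 - lambda x); None encodes the value +oo at a pole. *)
Definition walkgen (R : rcfType) (n : nat) (M : 'M[R]_n) (x : R) : option R :=
  let s := [seq l <- spec M | eigweight M l != 0] in
  if has (fun l => 1 - l * x == 0) s then None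
  else Some (\sum_(l <- s) eigweight M l / (1 - l * x)).

(* Main.v *)
Require Import Defs.
From HB Require Import structures.
From mathcomp Require Import all_boot all_order all_algebra.
From mathcomp Require Import polyrcf.
From mathcomp Require Import spectral sesquilinear mxred complex.
From mathcomp Require Import ring lra.
Set Implicit Arguments. Unset Strict Implicit. Unset Printing Implicit Defensive.
Import Order.TTheory GRing.Theory Num.Theory.
Local Open Scope ring_scope.

Lemma sub_sum_seq (R : fieldType) n (s : seq R) (E : R -> 'M[R]_n) r :
  r \in s -> (E r <= \sum_(l <- s) E l)%MS.
Proof.
elim: s => // a s IH; rewrite inE big_cons => /orP [/eqP ->|/IH H].
  exact: addsmxSl.
exact: (submx_trans H (addsmxSr _ _)).
Qed.

Lemma in_spec (R : rcfType) n (S : 'M[R]_n) r :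
  eigenvalue S r -> r \in spec S.
Proof.
rewrite eigenvalue_root_char /spec => H.
have p0 : char_poly S != 0 by rewrite monic_neq0 // char_poly_monic.
by rewrite -(roots_on_rootsR p0) H andbT.
Qed.

Lemma spec_full (R : rcfType) n (S : 'M[R]_n) : S^T = S ->
  (1%:M <= \sum_(l <- spec S) eigenspace S l)%MS.
Proof.
move=> symS.
pose f := real_complex R.
pose AC := map_mx f S.
have ACsym : AC \is symmetricmx.
  by apply/is_hermitianmxP; rewrite expr0 scale1r map_mx_id // /AC map_trmx symS.
have ACreal : AC \is a realmx.
  by apply/mxOverP => i j; rewrite mxE; apply/complex_realP; eexists.
have ACherm := realsym_hermsym ACsym ACreal.
have /orthomx_spectralP ACE := hermitian_normalmx ACherm.
have dreal := hermitian_spectral_diag_real ACherm.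
set P := spectralmx AC in ACE.
set d := spectral_diag AC in ACE dreal.
have Punit : P \in unitmx by apply: spectral_unit.
have PA : P *m AC = diag_mx d *m P by rewrite {1}ACE !mulmxA mulmxV // mul1mx.
set Sm := (\sum_(l <- spec S) eigenspace S l)%MS.
suff HP : (P <= map_mx f Sm)%MS.
  rewrite -(map_submx f) map_mx1; apply: submx_trans HP.
  by rewrite sub1mx row_full_unit.
apply/row_subP => i.
pose r := complex.Re (d 0 i).
have dr : d 0 i = f r by rewrite /f RRe_real // (mxOverP dreal).
have Hrow : row i P *m AC = f r *: row i P.
  rewrite -row_mul PA mul_diag_mx -dr; apply/rowP => j; rewrite !mxE //.
have Hsub : (row i P <= map_mx f (eigenspace S r))%MS.
  by rewrite map_eigenspace; apply/eigenspaceP.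
have Hr : r \in spec S.
  apply: in_spec; rewrite /eigenvalue; apply: contraTneq Hsub => E0.
  rewrite E0 map_mx0 submx0 rowE mulmx_free_eq0 ?row_free_unit //.
  apply/eqP => /matrixP /(_ 0 i); rewrite !mxE !eqxx /= => /eqP.
  by rewrite oner_eq0.
apply: submx_trans Hsub _; rewrite map_submx; exact: sub_sum_seq.
Qed.

Section Proj.
Variables (R : rcfType) (n : nat).

Lemma dot_eq0 m (w : 'rV[R]_m) : (w *m w^T) 0 0 = 0 -> w = 0.
Proof.
rewrite mxE => H; apply/rowP => k; rewrite mxE.
have Hp : forall j, predT j -> 0 <= w 0 j * w^T j 0.
  by move=> j _; rewrite mxE -expr2 sqr_ge0.
have := psumr_eq0P Hp H (isT : predT k).
by rewrite mxE => /eqP; rewrite mulf_eq0 orbb => /eqP.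
Qed.

Lemma dot_ge0 m (w : 'rV[R]_m) : 0 <= (w *m w^T) 0 0.
Proof.
rewrite mxE; apply: sumr_ge0 => j _; rewrite mxE -expr2 sqr_ge0 //.
Qed.

Lemma BBt_unit p (B : 'M[R]_(p, n)) : row_free B -> B *m B^T \in unitmx.
Proof.
move=> fB; rewrite -row_free_unit; apply: inj_row_free => c Hc.
have : (c *m B) *m (c *m B)^T = 0 by rewrite trmx_mul !mulmxA -(mulmxA c) Hc mul0mx.
move=> /(congr1 (fun M : 'M[R]_1 => M 0 0)) /=; rewrite [X in _ = X]mxE => /dot_eq0 /eqP.
by rewrite mulmx_free_eq0 // => /eqP.
Qed.

Variables (p : nat) (B : 'M[R]_(p, n)).
Hypothesis fB : row_free B.
Let P := orth_proj B.

Lemma projT : P^T = P.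
Proof.
by rewrite /P /orth_proj !trmx_mul trmxK trmx_inv trmx_mul trmxK mulmxA.
Qed.

Lemma proj_id m (v : 'M[R]_(m, n)) : (v <= B)%MS -> v *m P = v.
Proof.
move=> /submxP [c ->]; rewrite /P /orth_proj !mulmxA -(mulmxA c) -(mulmxA c).
by rewrite mulmxV ?BBt_unit // mulmx1.
Qed.

Lemma proj_0 m (v : 'M_(m, n)) : v *m B^T = 0 -> v *m P = 0.
Proof. by move=> H; rewrite /P /orth_proj !mulmxA H !mul0mx. Qed.

Lemma projP : P *m P = P.
Proof.
apply: proj_id; rewrite /P /orth_proj submxMl //.
Qed.

End Proj.

Section Eig.
Variables (R : rcfType) (n : nat) (S : 'M[R]_n).
Hypothesis symS : S^T = S.

Lemma rb_free l : row_free (row_base (eigenspace S l)).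
Proof. exact: row_base_free. Qed.

Lemma rb_sub l : (row_base (eigenspace S l) <= eigenspace S l)%MS.
Proof. by rewrite eq_row_base. Qed.

Lemma eigprojT l : (eigproj S l)^T = eigproj S l.
Proof. exact: projT. Qed.

Lemma eigprojP l : eigproj S l *m eigproj S l = eigproj S l.
Proof. exact/projP/rb_free. Qed.

Lemma eigprojS l : eigproj S l *m S = l *: eigproj S l.
Proof.
have /eigenspaceP HB := rb_sub l.
rewrite /eigproj /orth_proj -mulmxA HB.
by rewrite -scalemxAr.
Qed.

Lemma eigproj_in l m (v : 'M[R]_(m, n)) : (v <= eigenspace S l)%MS ->
  v *m eigproj S l = v.
Proof. by move=> H; apply: proj_id; rewrite ?rb_free // eq_row_base. Qed.

Lemma eigproj_out l l' m (v : 'M[R]_(m, n)) : (v <= eigenspace S l')%MS ->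
  l' != l -> v *m eigproj S l = 0.
Proof.
move=> /eigenspaceP Hv Hl; apply: proj_0.
set B := row_base _.
have /eigenspaceP HB := rb_sub l.
have : (v *m S) *m B^T = v *m (B *m S)^T.
  by rewrite [in RHS]trmx_mul symS mulmxA.
rewrite Hv HB -scalemxAl linearZ /= -scalemxAr => /eqP.
rewrite -subr_eq0 -scalerBl scaler_eq0 subr_eq0 (negbTE Hl) /= => /eqP //.
Qed.

End Eig.

Section Spec.
Variables (R : rcfType) (n : nat) (S : 'M[R]_n).
Hypothesis symS : S^T = S.

Lemma spec_uniq : uniq (spec S).
Proof. by apply: lt_sorted_uniq; apply: sorted_roots. Qed.

Lemma sum_eigproj : \sum_(l <- spec S) eigproj S l = 1%:M.
Proof.
set s := spec S; set T := \sum_(l <- s) eigproj S l.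
have key : forall l m (v : 'M_(m, n)), l \in s ->
    (v <= eigenspace S l)%MS -> v *m T = v.
  move=> l m v ls vE; rewrite /T mulmx_sumr (bigD1_seq l) //= ?spec_uniq //.
  rewrite (eigproj_in vE) big1 ?addr0 // => l' nl'.
  by apply: (eigproj_out symS vE); rewrite eq_sym.
have gen : forall t, {subset t <= s} -> forall (v : 'rV_n),
    (v <= \sum_(l <- t) eigenspace S l)%MS -> v *m T = v.
  elim => [|a t IH] sub v; first by rewrite big_nil submx0 => /eqP ->; rewrite mul0mx.
  rewrite big_cons => /sub_addsmxP [[u1 u2] /= ->].
  rewrite mulmxDl (key a) ?(sub _ (mem_head _ _)) ?submxMl // IH //.
    by move=> x xt; apply: sub; rewrite inE xt orbT.
  exact: submxMl.
apply/row_matrixP => i; rewrite -[T]mul1mx row_mul (gen s) //.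
exact: submx_trans (row_sub _ _) (spec_full symS).
Qed.

Lemma S_decomp : S = \sum_(l <- spec S) l *: eigproj S l.
Proof.
rewrite -{1}[S]mul1mx -sum_eigproj mulmx_suml; apply: eq_bigr => l _.
exact: eigprojS.
Qed.

End Spec.

Definition Q (R : rcfType) n (M : 'M[R]_n) (v : 'rV[R]_n) := (v *m M *m v^T) 0 0.

Section QF.
Variables (R : rcfType) (n : nat).
Implicit Types (M : 'M[R]_n) (v : 'rV[R]_n).

Lemma Q_sum (s : seq R) (F : R -> 'M[R]_n) v :
  Q (\sum_(l <- s) F l) v = \sum_(l <- s) Q (F l) v.
Proof. by rewrite /Q mulmx_sumr mulmx_suml summxE. Qed.

Lemma QZ a M v : Q (a *: M) v = a * Q M v.
Proof. by rewrite /Q -scalemxAr -scalemxAl mxE. Qed.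

Lemma QD M1 M2 v : Q (M1 + M2) v = Q M1 v + Q M2 v.
Proof. by rewrite /Q mulmxDr mulmxDl mxE. Qed.

Lemma QN M v : Q (- M) v = - Q M v.
Proof. by rewrite /Q mulmxN mulNmx mxE. Qed.

Lemma Q_proj_dot (S : 'M[R]_n) l v :
  Q (eigproj S l) v = ((v *m eigproj S l) *m (v *m eigproj S l)^T) 0 0.
Proof.
suff H : forall P : 'M[R]_n, P^T = P -> P *m P = P ->
    (v *m P *m v^T) 0 0 = ((v *m P) *m (v *m P)^T) 0 0.
  by apply: H; [apply: eigprojT | apply: eigprojP].
move=> P PT PP.
by rewrite trmx_mul PT mulmxA -[v *m P *m P]mulmxA PP.
Qed.

Lemma Q_ge0_proj (S : 'M[R]_n) l v : 0 <= Q (eigproj S l) v.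
Proof. by rewrite Q_proj_dot; exact: dot_ge0. Qed.

Lemma Q1 v : Q 1%:M v = (v *m v^T) 0 0.
Proof. by rewrite /Q mulmx1. Qed.

Variable S : 'M[R]_n.
Hypothesis symS : S^T = S.

Lemma ray_eq m v : m * Q 1%:M v - Q S v =
  \sum_(l <- spec S) (m - l) * Q (eigproj S l) v.
Proof.
rewrite [in Q S v](S_decomp symS) -(sum_eigproj symS) !Q_sum mulr_sumr -sumrB.
by apply: eq_bigr => l _; rewrite QZ mulrBl.
Qed.

Lemma ray_up m v : (forall l, l \in spec S -> l <= m) ->
  Q S v <= m * Q 1%:M v.
Proof.
move=> H; rewrite -subr_ge0 ray_eq big_seq; apply: sumr_ge0 => l ls.
by apply: mulr_ge0; rewrite ?subr_ge0 ?H ?Q_ge0_proj.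
Qed.

Lemma ray_low m v : (forall l, l \in spec S -> m <= l) ->
  m * Q 1%:M v <= Q S v.
Proof.
move=> H; rewrite -subr_ge0 -opprB ray_eq -sumrN big_seq; apply: sumr_ge0 => l ls.
by rewrite -mulNr opprB; apply: mulr_ge0; rewrite ?subr_ge0 ?H ?Q_ge0_proj.
Qed.

Lemma ray_ker m v : (forall l, l \in spec S -> l <= m) ->
  Q S v = m * Q 1%:M v -> v *m S = m *: v.
Proof.
move=> H E.
have Z : \sum_(l <- spec S | l \in spec S) (m - l) * Q (eigproj S l) v = 0.
  by rewrite -big_seq -ray_eq E subrr.
have Hp : forall l, l \in spec S -> 0 <= (m - l) * Q (eigproj S l) v.
  by move=> l ls; apply: mulr_ge0; rewrite ?subr_ge0 ?H ?Q_ge0_proj.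
move: Z => /eqP; rewrite psumr_eq0 // => /allP each.
have -> : m *: v = m *: (v *m \sum_(l <- spec S) eigproj S l).
  by rewrite sum_eigproj // mulmx1.
rewrite [in LHS](S_decomp symS) !mulmx_sumr scaler_sumr; apply: eq_big_seq => l ls.
have := each l ls; rewrite ls /= mulf_eq0 subr_eq0 => /orP [/eqP <-|].
  by rewrite -scalemxAr.
rewrite Q_proj_dot => /eqP /dot_eq0 vP0.
by rewrite -scalemxAr vP0 !scaler0.
Qed.

End QF.

Lemma Qdelta (R : rcfType) n (M : 'M[R]_n) i j :
  Q M (delta_mx 0 i - delta_mx 0 j) = M i i - M i j - M j i + M j j.
Proof.
have E : forall a b : 'I_n,
    (delta_mx (0 : 'I_1) a *m M *m (delta_mx (0 : 'I_1) b)^T) 0 0 = M a b.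
  by move=> a b; rewrite trmx_delta -rowE -colE !mxE.
rewrite /Q linearB /= !mulmxBr !mulmxBl !mxE -!E.
by rewrite !mxE; lra.
Qed.

Lemma bigmax_ge (R : rcfType) (x0 : R) (s : seq R) r :
  r \in s -> r <= \big[Num.max/x0]_(i <- s) i.
Proof.
elim: s => // a s IH; rewrite inE big_cons => /orP [/eqP ->|/IH H].
  by rewrite le_max lexx.
by rewrite le_max H orbT.
Qed.

Lemma bigmin_le (R : rcfType) (x0 : R) (s : seq R) r :
  r \in s -> \big[Num.min/x0]_(i <- s) i <= r.
Proof.
elim: s => // a s IH; rewrite inE big_cons => /orP [/eqP ->|/IH H].
  by rewrite ge_min lexx.
by rewrite ge_min H orbT.
Qed.

Lemma bigmin_mem (R : rcfType) (x0 : R) (s : seq R) :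
  \big[Num.min/x0]_(i <- s) i \in x0 :: s.
Proof.
elim: s => [|a s IH]; first by rewrite big_nil mem_head.
rewrite big_cons; case: (leP a (\big[Num.min/x0]_(i <- s) i)) => _.
  by rewrite !inE eqxx orbT.
move: IH; rewrite !inE => /orP [->//|->]; by rewrite !orbT.
Qed.

Lemma eig_max_ge (R : rcfType) n (M : 'M[R]_n) l : l \in spec M -> l <= eig_max M.
Proof. exact: bigmax_ge. Qed.

Lemma eig_min_le (R : rcfType) n (M : 'M[R]_n) l : l \in spec M -> eig_min M <= l.
Proof. exact: bigmin_le. Qed.

Lemma eig_min_mem (R : rcfType) n (M : 'M[R]_n) : spec M != [::] -> eig_min M \in spec M.
Proof.
rewrite /eig_min; case: (spec M) => // a s _ /=.
by have := bigmin_mem a (a :: s); rewrite inE => /orP [/eqP ->|//]; rewrite mem_head.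
Qed.

Lemma spec_eigenvalue (R : rcfType) n (M : 'M[R]_n) l : l \in spec M -> eigenvalue M l.
Proof.
rewrite eigenvalue_root_char /spec => H.
have p0 : char_poly M != 0 by rewrite monic_neq0 // char_poly_monic.
by move: H; rewrite -(roots_on_rootsR p0) => /andP [].
Qed.

Lemma bigminn_le (I : eqType) (F : I -> nat) x0 (s : seq I) i :
  i \in s -> (\big[minn/x0]_(j <- s) F j <= F i)%N.
Proof.
elim: s => // a s IH; rewrite inE big_cons => /orP [/eqP ->|/IH H].
  by rewrite geq_minl.
exact: leq_trans (geq_minr _ _) H.
Qed.

Section Graph.
Variables (R : rcfType) (n : nat) (e : rel 'I_n).
Hypothesis symE : symmetric e.
Hypothesis irrE : irreflexive e.

Local Notation A := (adjm R e).
Local Notation D := (degm R e).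
Local Notation L := (laplm R e).

Lemma AT : A^T = A.
Proof. by apply/matrixP => i j; rewrite !mxE symE. Qed.

Lemma DT : D^T = D.
Proof.
apply/matrixP => i j; rewrite !mxE eq_sym.
by case: eqP => [->|]; rewrite ?mul0r.
Qed.

Lemma LT : L^T = L.
Proof. by rewrite /laplm linearB /= AT DT. Qed.

Lemma sumA i : \sum_j A i j = (deg e i)%:R.
Proof.
rewrite /deg -sum1_card natr_sum [RHS]big_mkcond /=; apply: eq_bigr => j _.
by rewrite !mxE inE; case: (e i j); rewrite ?mulr1n ?mulr0n.
Qed.

Lemma sumD i : \sum_j D i j = (deg e i)%:R.
Proof.
rewrite (bigD1 i) //= big1 ?addr0 => [|j /negbTE]; first by rewrite mxE eqxx mul1r.
by rewrite mxE eq_sym => ->; rewrite mul0r.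
Qed.

Lemma L1 : L *m ones R n = 0.
Proof.
have H : forall M : 'M[R]_n, (M *m ones R n) = \col_i (\sum_j M i j).
  by move=> M; apply/colP => i; rewrite !mxE; apply: eq_bigr => j _; rewrite mxE mulr1.
rewrite /laplm mulmxBl !H; apply/colP => i; rewrite !mxE sumA sumD subrr //.
Qed.

Lemma mindeg_le i : (mindeg e <= deg e i)%N.
Proof. by rewrite /mindeg; apply: bigminn_le; rewrite mem_index_enum. Qed.

Lemma Q1E (v : 'rV[R]_n) : Q 1%:M v = \sum_b (v 0 b) ^+ 2.
Proof. by rewrite /Q mulmx1 mxE; apply: eq_bigr => b _; rewrite mxE expr2. Qed.

Lemma QDE (v : 'rV[R]_n) : Q D v = \sum_b (deg e b)%:R * (v 0 b) ^+ 2.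
Proof.
rewrite /Q mxE; apply: eq_bigr => b _; rewrite !mxE.
rewrite (bigD1 b) //= big1 ?addr0 => [|a /negbTE nab]; last by rewrite !mxE nab mul0r mulr0.
by rewrite !mxE eqxx mul1r expr2; ring.
Qed.

Lemma QD_ge (v : 'rV[R]_n) : (mindeg e)%:R * Q 1%:M v <= Q D v.
Proof.
rewrite Q1E QDE mulr_sumr; apply: ler_sum => b _.
by apply: ler_wpM2r; rewrite ?sqr_ge0 // ler_nat mindeg_le.
Qed.

End Graph.

Lemma dotC (R : rcfType) n (x y : 'rV[R]_n) : (x *m y^T) 0 0 = (y *m x^T) 0 0.
Proof. by rewrite -[y *m x^T]trmxK trmx_mul trmxK [RHS]mxE. Qed.

Lemma dot_sq (R : rcfType) n (x y : 'rV[R]_n) a :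
  ((x - a *: y) *m (x - a *: y)^T) 0 0 =
  (x *m x^T) 0 0 - 2 * a * (x *m y^T) 0 0 + a ^+ 2 * (y *m y^T) 0 0.
Proof.
have tB : (x - a *: y)^T = x^T - a *: y^T by apply/matrixP => i j; rewrite !mxE.
rewrite tB mulmxBl mulmxBr mulmxBr -!scalemxAl -!scalemxAr.
rewrite !mxE.
have e1 : \sum_j y 0 j * x^T j 0 = \sum_j x 0 j * y^T j 0.
  by apply: eq_bigr => j _; rewrite !mxE mulrC.
rewrite e1; ring.
Qed.

Unset Implicit Arguments.
Set Strict Implicit.

Theorem proposition1 (R : rcfType) (n : nat) (e : rel 'I_n) :
  simple_graph e -> has_edge e ->
  exists x : R, exists w : R,
    [/\ (eig_min (adjm R e))^-1 <= x, x <= 0,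
        walkgen (adjm R e) x = Some w &
        w <= n%:R * (1 - (mindeg e)%:R / eig_max (laplm R e))].
Proof.
move=> [symE irrE] [i0 [j0 eij]].
have symA : (adjm R e)^T = adjm R e by apply: AT.
have symL : (laplm R e)^T = laplm R e by apply: LT.
have L1' : laplm R e *m ones R n = 0 by apply: L1.
have ij : i0 != j0 by apply: contraTneq eij => ->; rewrite irrE.
set A := adjm R e in symA *.
set D := degm R e.
set L := laplm R e in symL L1' *.
set lam := eig_min A. set mu := eig_max L. set del := (mindeg e)%:R : R.
have QLdec : forall u, Q L u = Q D u - Q A u.
  by move=> u; rewrite /L /laplm QD QN.
pose w : 'rV[R]_n := delta_mx 0 i0 - delta_mx 0 j0.
have Q1w : Q 1%:M w = 2.
  by rewrite Qdelta !mxE !eqxx (negbTE ij) eq_sym (negbTE ij) /= ?mulr1n ?mulr0n; lra.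
have QAw : Q A w = -2.
  by rewrite Qdelta !mxE !irrE eij (symE j0 i0) eij /= ?mulr1n ?mulr0n; lra.
have QDw : Q D w = (deg e i0)%:R + (deg e j0)%:R.
  rewrite Qdelta !mxE !eqxx (negbTE ij) eq_sym (negbTE ij) /= ?mulr1n ?mulr0n ?mul1r ?mul0r; lra.
have lam_le : lam <= -1.
  have := ray_low symA (m := lam) w (fun l => eig_min_le (M := A) (l := l)).
  rewrite Q1w QAw; lra.
have mu_ge : del + 1 <= mu.
  have := ray_up symL (m := mu) w (fun l => eig_max_ge (M := L) (l := l)).
  rewrite QLdec QDw QAw Q1w.
  have := mindeg_le e i0; have := mindeg_le e j0.
  rewrite -!(ler_nat R) -/del; lra.
set t := mu - del.
have t_gt0 : 0 < t by rewrite /t; lra.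
have tn0 : t != 0 by rewrite gt_eqF.
have del0 : 0 <= del by rewrite /del ler0n.
have mu_gt0 : 0 < mu by lra.
have mun0 : mu != 0 by rewrite gt_eqF.
have spec_ne : spec A != [::].
  apply/eqP => s0; have := sum_eigproj symA; rewrite s0 big_nil.
  move=> /matrixP /(_ i0 i0); rewrite !mxE eqxx /= => /eqP.
  by rewrite eq_sym oner_eq0.
have lam_in : lam \in spec A := eig_min_mem spec_ne.
have /eigenvalueP [v vA v0] := spec_eigenvalue lam_in.
have Q1v : 0 < Q 1%:M v.
  rewrite lt_def Q1 dot_ge0 andbT; apply: contra v0 => /eqP /dot_eq0 ->.
  by [].
have QAv : Q A v = lam * Q 1%:M v by rewrite /Q vA mulmx1 -scalemxAl mxE.
have t_lam : - lam <= t.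
  have h1 := ray_up symL (m := mu) v (fun l => eig_max_ge (M := L) (l := l)).
  have h2 := QD_ge e v.
  rewrite QLdec QAv in h1.
  have : 0 <= (t + lam) * Q 1%:M v by rewrite /t -/del; lra.
  by rewrite pmulr_lge0 // => ?; lra.
pose x0 := - t^-1.
have pole : forall l, l \in spec A -> 1 - l * x0 = 0 -> eigproj A l *m ones R n = 0.
  move=> l ls hl.
  have e1 : l * t^-1 = -1.
    by move: hl; rewrite /x0 mulrN opprK => /eqP; rewrite addrC addr_eq0 => /eqP.
  have lt : l = - t by rewrite -[l](mulfVK tn0) e1 mulN1r.
  set B := row_base (eigenspace A l).
  suff HB : B *m ones R n = 0 by rewrite /eigproj /orth_proj -mulmxA HB mulmx0.
  apply/colP => k; rewrite [RHS]mxE.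
  have -> : (B *m ones R n) k 0 = (row k (B *m ones R n)) 0 0 by rewrite [RHS]mxE.
  rewrite row_mul; set b := row k B.
  have bE : (b <= eigenspace A l)%MS := submx_trans (row_sub k B) (rb_sub A l).
  have /eigenspaceP bA := bE.
  have QAb : Q A b = l * Q 1%:M b by rewrite /Q bA mulmx1 -scalemxAl mxE.
  have h1 := ray_up symL (m := mu) b (fun l => eig_max_ge (M := L) (l := l)).
  have h2 := QD_ge e b.
  have eqb : Q L b = mu * Q 1%:M b.
    apply/eqP; rewrite eq_le h1 /= QLdec QAb lt.
    move: h2; rewrite -/del /t; lra.
  have bL := ray_ker symL (fun l => eig_max_ge (M := L) (l := l)) eqb.
  have : b *m L *m ones R n = 0 by rewrite -mulmxA L1' mulmx0.
  rewrite bL -scalemxAl => /matrixP /(_ 0 0); rewrite !mxE => /eqP.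
  by rewrite mulf_eq0 (negbTE mun0) /= => /eqP.
pose o := (ones R n)^T.
have oP0 : forall l, l \in spec A -> 1 - l * x0 = 0 -> o *m eigproj A l = 0.
  by move=> l ls hl; rewrite /o -(eigprojT A l) -trmx_mul pole // trmx0.
pose F := fun l => (1 - l * x0)^-1 *: (o *m eigproj A l).
pose u := \sum_(l <- spec A | 1 - l * x0 != 0) F l.
have uM : u *m (1%:M - x0 *: A) = o.
  rewrite /u mulmx_suml.
  transitivity (\sum_(l <- spec A | 1 - l * x0 != 0) o *m eigproj A l).
    apply: eq_bigr => l hl.
    have h : o *m eigproj A l *m A = l *: (o *m eigproj A l).
      by rewrite -mulmxA eigprojS -scalemxAr.
    rewrite /F -scalemxAl mulmxBr mulmx1 -scalemxAr h scalerA.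
    have -> : o *m eigproj A l - (x0 * l) *: (o *m eigproj A l) =
        (1 - l * x0) *: (o *m eigproj A l) by rewrite scalerBl scale1r mulrC.
    by rewrite scalerA mulVf // scale1r.
  rewrite big_mkcond /=; transitivity (\sum_(l <- spec A) o *m eigproj A l).
    apply: eq_big_seq => l ls; case: ifPn => // /negPn /eqP h.
    by rewrite oP0.
  by rewrite -mulmx_sumr sum_eigproj // mulmx1.
pose W := (u *m o^T) 0 0.
have wE : forall l, eigweight A l = (o *m eigproj A l *m o^T) 0 0.
  by move=> l; rewrite /eigweight /o trmxK.
have WG : walkgen A x0 = Some W.
  rewrite /walkgen.
  have nopole : forall l, l \in [seq l <- spec A | eigweight A l != 0] -> 1 - l * x0 != 0.
    move=> l; rewrite mem_filter => /andP [wl ls]; apply: contra wl => /eqP hl.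
    by rewrite /eigweight -mulmxA pole // mulmx0 mxE.
  have -> : has (fun l => 1 - l * x0 == 0) [seq l <- spec A | eigweight A l != 0] = false.
    by apply/hasPn => l /nopole.
  congr Some.
  rewrite /W /u mulmx_suml summxE big_filter big_mkcond [RHS]big_mkcond; apply: eq_big_seq => l ls /=.
  case: (eqVneq (eigweight A l) 0) => hw /=.
    by case: ifP => // _; rewrite /F -scalemxAl mxE -wE hw mulr0.
  have np : 1 - l * x0 != 0.
    by apply: contra hw => /eqP hl; rewrite /eigweight -mulmxA pole // mulmx0 mxE.
  by rewrite np /F -scalemxAl mxE -wE mulrC.
exists x0, W; split => //.
- have lam_lt0 : 0 < - lam by lra.
  rewrite /x0 -[lam]opprK invrN lerN2 lef_pV2 ?posrE //.
- by rewrite /x0 oppr_le0 invr_ge0 ltW.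
have QMu : Q (1%:M - x0 *: A) u = W by rewrite /Q uM /W dotC.
rewrite QD QN QZ in QMu.
pose a := t / mu.
have oL : o *m L = 0 by rewrite /o -symL -trmx_mul L1' trmx0.
have QLa : Q L (u - a *: o) = Q L u.
  rewrite /Q mulmxBl -scalemxAl oL scaler0 subr0.
  have tB : (u - a *: o)^T = u^T - a *: o^T by apply/matrixP=> i j; rewrite !mxE.
  rewrite tB mulmxBr -scalemxAr /o trmxK -[u *m L *m ones R n]mulmxA L1'.
  by rewrite mulmx0 scaler0 subr0.
have oo : (o *m o^T) 0 0 = n%:R.
  rewrite /o trmxK mxE; under eq_bigr do rewrite !mxE mulr1.
  by rewrite sumr_const card_ord.
have Q1a : Q 1%:M (u - a *: o) = Q 1%:M u - 2 * a * W + a ^+ 2 * n%:R.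
  by rewrite !Q1 dot_sq oo.
have h1 := ray_up symL (m := mu) (u - a *: o) (fun l => eig_max_ge (M := L) (l := l)).
rewrite QLa Q1a QLdec in h1.
have h2 := QD_ge e u.
have hW : W = Q 1%:M u + t^-1 * Q A u by rewrite -QMu /x0 mulNr opprK.
have qA : Q A u = t * W - t * Q 1%:M u.
  by rewrite hW mulrDr mulrA mulfV // mul1r; ring.
have h1' : Q D u - Q A u <= mu * Q 1%:M u - 2 * t * W + t ^+ 2 / mu * n%:R.
  have -> : mu * Q 1%:M u - 2 * t * W + t ^+ 2 / mu * n%:R =
      mu * (Q 1%:M u - 2 * a * W + a ^+ 2 * n%:R) by rewrite /a; field.
  exact: h1.
have key : t * W <= t * (t / mu * n%:R).
  rewrite qA in h1'; move: h1' h2; rewrite -/del /t; lra.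
rewrite ler_pM2l // in key.
have -> : n%:R * (1 - del / mu) = t / mu * n%:R by rewrite /t; field.
exact: key.
Qed.
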